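(* Let $\{F_\theta\}_{\theta\in(0,1)}$ be a stable family of interpolation functors, let $T:(X_0,X_1)\to(Y_0,Y_1)$ be a bounded linear operator between Banach couples, and let $I\subset(0,1)$ be an interval of invertibility of $T$ with respect to $\{F_\theta\}$. If $Y_0\cap Y_1$ is dense in $F_\alpha(\vec Y)\cap F_\beta(\vec Y)$ for all $\alpha,\beta\in(0,1)$, then for any $\theta_0,\theta_1\in I$ the inverse operators $T_{\theta_0}^{-1}$ and $T_{\theta_1}^{-1}$ agree on $F_{\theta_0}(\vec Y)\cap F_{\theta_1}(\vec Y)$.
   Context: An operator $T:\vec X\to\vec Y$ is a linear map $X_0+X_1\to Y_0+Y_1$ bounded $X_j\to Y_j$. An interpolation functor $F$ assigns to each Banach couple $\vec A$ a Banach space $F(\vec A)$ with $A_0\cap A_1\subset F(\vec A)\subset A_0+A_1$ continuously, such that every operator $\vec A\to\vec B$ maps $F(\vec A)$ boundedly into $F(\vec B)$. $T_\theta$ denotes the restriction $T:F_\theta(\vec X)\to F_\theta(\vec Y)$; $F_\alpha(\vec Y)\cap F_\beta(\vec Y)$ carries the norm $\max\{\|\cdot\|_{F_\alpha(\vec Y)},\|\cdot\|_{F_\beta(\vec Y)}\}$. A family $\{F_\theta\}_{\theta\in(0,1)}$ is stable if for all Banach couples $\vec A,\vec B$ and every operator $S:\vec A\to\vec B$ with $S_{\theta_*}:F_{\theta_*}(\vec A)\to F_{\theta_*}(\vec B)$ invertible for some $\theta_*\in(0,1)$, there is $\varepsilon>0$ such that for all $\theta\in I(\theta_* )=(\theta_*-\varepsilon,\theta_*+\varepsilon)$: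 (i) $S_\theta$ is invertible; (ii) $S_\theta^{-1}y=S_{\theta_*}^{-1}y$ for all $y\in B_0\cap B_1$; (iii) $\sup_{\theta\in I(\theta_* )}\|S_\theta^{-1}\|\le C(\theta_* )\|S_{\theta_*}^{-1}\|$. For a stable family the set of $\theta\in(0,1)$ for which $T_\theta$ is invertible is open; its connected components (maximal open intervals) are called intervals of invertibility of $T$. *)

(* Defs.v *)
(* Scalars: K : numFieldType (covers real and complex
   Banach spaces); interpolation parameters theta : R, R : realType. *)
From HB Require Import structures.
From mathcomp Require Import all_boot all_order all_algebra.
From mathcomp Require Import reals.

Set Implicit Arguments.
Unset Strict Implicit.
Unset Printing Implicit Defensive.

Import Order.TTheory GRing.Theory Num.Theory.
Local Open Scope ring_scope.

Section Interpolation.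
Variable K : numFieldType.

(* A normed subspace of an ambient K-vector space V: membership predicate
   together with a norm (only meaningful on members). *)
Record nspace (V : lmodType K) := NSpace {
  ns_mem : V -> Prop;
  ns_norm : V -> K }.

Definition is_banach (V : lmodType K) (X : nspace V) : Prop :=
  [/\ ns_mem X 0,
      (forall (a : K) x y, ns_mem X x -> ns_mem X y -> ns_mem X (a *: x + y)),
      (forall x, ns_mem X x -> 0 <= ns_norm X x),
      (forall x, ns_mem X x -> ns_norm X x = 0 -> x = 0)
    & [/\
      (forall (a : K) x, ns_mem X x -> ns_norm X (a *: x) = `|a| * ns_norm X x),
      (forall x y, ns_mem X x -> ns_mem X y ->
         ns_norm X (x + y) <= ns_norm X x + ns_norm X y)
    & (forall u : nat -> V, (forall n, ns_mem X (u n)) ->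
         (forall e : K, 0 < e -> exists M, forall m n, (M <= m)%N -> (M <= n)%N ->
              ns_norm X (u m - u n) < e) ->
         exists x, ns_mem X x /\
           forall e : K, 0 < e -> exists M, forall n, (M <= n)%N ->
              ns_norm X (u n - x) < e)]].

(* A Banach couple (A0, A1): two Banach spaces inside an ambient vector space
   V which is exactly A0 + A1, and such that A0 + A1 is Hausdorff (the
   K-functional norm || x ||_{A0+A1} = inf {||x0||_0 + ||x1||_1 : x = x0 + x1}
   vanishes only at 0). *)
Record couple := Couple {
  cV : lmodType K;
  c0 : nspace cV;
  c1 : nspace cV;
  c0_banach : is_banach c0;
  c1_banach : is_banach c1;
  c_sum : forall x : cV, exists x0 x1,
      [/\ ns_mem c0 x0, ns_mem c1 x1 & x = x0 + x1];
  c_hausdorff : forall x : cV,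
      (forall e : K, 0 < e -> exists x0 x1,
         [/\ ns_mem c0 x0, ns_mem c1 x1, x = x0 + x1
           & ns_norm c0 x0 + ns_norm c1 x1 < e]) -> x = 0 }.

Definition is_linear (V W : lmodType K) (f : V -> W) : Prop :=
  forall (a : K) x y, f (a *: x + y) = a *: f x + f y.

Definition bounded_into (V W : lmodType K) (X : nspace V) (Y : nspace W)
  (f : V -> W) : Prop :=
  exists C : K, forall x, ns_mem X x ->
    ns_mem Y (f x) /\ ns_norm Y (f x) <= C * ns_norm X x.

Definition operator (A B : couple) (T : cV A -> cV B) : Prop :=
  [/\ is_linear T, bounded_into (c0 A) (c0 B) T & bounded_into (c1 A) (c1 B) T].

Record interp_functor := InterpFunctor {
  ifun : forall A : couple, nspace (cV A);
  ifun_banach : forall A, is_banach (ifun A);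
  ifun_cap : forall A, exists C : K, forall x,
      ns_mem (c0 A) x -> ns_mem (c1 A) x ->
      ns_mem (ifun A) x /\
      ns_norm (ifun A) x <= C * Num.max (ns_norm (c0 A) x) (ns_norm (c1 A) x);
  ifun_sum : forall A, exists C : K, forall x, ns_mem (ifun A) x ->
      exists x0 x1, [/\ ns_mem (c0 A) x0, ns_mem (c1 A) x1, x = x0 + x1
                      & ns_norm (c0 A) x0 + ns_norm (c1 A) x1
                          <= C * ns_norm (ifun A) x];
  ifun_interp : forall (A B : couple) (T : cV A -> cV B),
      operator T -> bounded_into (ifun A) (ifun B) T }.

Definition invertible_between (V W : lmodType K) (X : nspace V) (Y : nspace W)
  (T : V -> W) : Prop :=
  [/\ forall x, ns_mem X x -> ns_mem Y (T x),
      forall y, ns_mem Y y -> exists x, ns_mem X x /\ T x = y,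
      forall x1 x2, ns_mem X x1 -> ns_mem X x2 -> T x1 = T x2 -> x1 = x2
    & exists M : K, forall x, ns_mem X x -> ns_norm X x <= M * ns_norm Y (T x)].

Variable R : realType.

Definition in01 (t : R) : Prop := 0 < t < 1.

Definition invertible_at (F : R -> interp_functor) (A B : couple)
  (T : cV A -> cV B) (t : R) : Prop :=
  in01 t /\ invertible_between (ifun (F t) A) (ifun (F t) B) T.

Definition stable_family (F : R -> interp_functor) : Prop :=
  exists C : R -> K, forall (A B : couple) (S : cV A -> cV B) (ts : R),
    operator S -> invertible_at F S ts ->
    exists eps : R, 0 < eps /\
      forall t, ts - eps < t < ts + eps ->
      [/\ invertible_at F S t,
          (forall y x x', ns_mem (c0 B) y -> ns_mem (c1 B) y ->
             ns_mem (ifun (F t) A) x -> ns_mem (ifun (F ts) A) x' ->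
             S x = y -> S x' = y -> x = x')
        &
          (forall M : K,
             (forall x, ns_mem (ifun (F ts) A) x ->
                ns_norm (ifun (F ts) A) x <= M * ns_norm (ifun (F ts) B) (S x)) ->
             forall x, ns_mem (ifun (F t) A) x ->
                ns_norm (ifun (F t) A) x
                  <= C ts * M * ns_norm (ifun (F t) B) (S x))].

Definition interval_of_invertibility (F : R -> interp_functor) (A B : couple)
  (T : cV A -> cV B) (a b : R) : Prop :=
  [/\ a < b,
      (forall t, a < t < b -> invertible_at F T t)
    & (forall a' b', a' <= a -> b <= b' ->
         (forall t, a' < t < b' -> invertible_at F T t) -> a' = a /\ b' = b)].

End Interpolation.

(* Main.v *)
Require Import Defs.
From HB Require Import structures.
From mathcomp Require Import all_boot all_order all_algebra.
From mathcomp Require Import reals.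
From mathcomp Require Import classical_sets.
Import Order.TTheory GRing.Theory Num.Theory.
Local Open Scope ring_scope.
Local Open Scope classical_set_scope.
Set Implicit Arguments.
Unset Strict Implicit.

Lemma preim_cap (K : numFieldType) (R : realType)
  (F : R -> interp_functor K) (X Y : couple K) (T : cV X -> cV Y) t z :
  invertible_at F T t -> ns_mem (c0 Y) z -> ns_mem (c1 Y) z ->
  exists v, ns_mem (ifun (F t) X) v /\ T v = z.
Proof.
move=> [_ [_ Hs _ _]] h0 h1; apply: Hs.
by have [C HC] := ifun_cap (F t) Y; case: (HC z h0 h1).
Qed.

Lemma agree_cap_le (K : numFieldType) (R : realType)
  (F : R -> interp_functor K) (X Y : couple K) (T : cV X -> cV Y) (a b : R) :
  stable_family F -> operator T ->
  (forall t, a < t < b -> invertible_at F T t) ->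
  forall t0 t1 : R, a < t0 -> t0 <= t1 -> t1 < b ->
  forall z u v, ns_mem (c0 Y) z -> ns_mem (c1 Y) z ->
    ns_mem (ifun (F t0) X) u -> ns_mem (ifun (F t1) X) v ->
    T u = z -> T v = z -> v = u.
Proof.
move=> [C HC] HT Hinv t0 t1 at0 t01 t1b z u v z0 z1 hu hv Tu Tv.
pose E := [set s : R | t0 <= s <= t1 /\ forall r, t0 <= r <= s ->
   forall w, ns_mem (ifun (F r) X) w -> T w = z -> w = u].
have inv r : t0 <= r <= t1 -> invertible_at F T r.
  move=> /andP[h1 h2]; apply: Hinv; apply/andP; split.
    exact: lt_le_trans at0 h1.
  exact: le_lt_trans h2 t1b.
have Et0 : E t0.
  split; first by rewrite lexx t01.
  move=> r /andP[h1 h2] w hw Tw.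
  have er : r = t0 by apply/eqP; rewrite eq_le h1 h2.
  subst r.
  have := inv t0; rewrite lexx t01 => /(_ isT) [_ [_ _ Hi _]].
  by apply: Hi => //; rewrite Tw Tu.
have hsup : has_sup E.
  split; first by exists t0.
  by exists t1 => s [/andP[_ ->]].
set s := sup E.
have t0s : t0 <= s by apply: sup_upper_bound.
have st1 : s <= t1 by apply: ge_sup; [exists t0 | move=> x [/andP[_ ->]]].
have invs : invertible_at F T s by apply: inv; rewrite t0s st1.
have [eps [eps0 Heps]] := HC X Y T s HT invs.
have [w [hw Tw]] := preim_cap invs z0 z1.
have [s' Es' lts'] := sup_adherent eps0 hsup.
have s's : s' <= s by apply: sup_upper_bound.
have ws : w = u.
  case: Es' => /andP[h1 h2] Hs'.
  have invs' : invertible_at F T s' by apply: inv; rewrite h1 h2.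
  have [w' [hw' Tw']] := preim_cap invs' z0 z1.
  have := Hs' s'; rewrite h1 lexx => /(_ isT w' hw' Tw') <-.
  have : s - eps < s' < s + eps.
    by rewrite lts' /=; apply: le_lt_trans s's _; rewrite ltrDl.
  move=> /Heps [_ Hii _]; apply: esym; exact: Hii z0 z1 hw' hw Tw' Tw.
have claim r : t0 <= r <= t1 -> r < s + eps ->
    forall w', ns_mem (ifun (F r) X) w' -> T w' = z -> w' = u.
  move=> /andP[h1 h2] hr w' hw' Tw'.
  case: (leP r s') => hrs.
    by case: Es' => _ Hs'; apply: (Hs' r) => //; rewrite h1 hrs.
  have : s - eps < r < s + eps by rewrite hr (lt_trans lts' hrs).
  move=> /Heps [_ Hii _]; rewrite -ws; exact: Hii z0 z1 hw' hw Tw' Tw.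
case: (ltP t1 (s + eps)) => ht1.
  by apply: (claim t1) => //; rewrite t01 lexx.
have Ee : E (s + eps / 2).
  have h1 : s < s + eps / 2 by rewrite ltrDl divr_gt0.
  have h2 : s + eps / 2 < s + eps by rewrite ltrD2l ltr_pdivrMr // ltr_pMr // ltr1n.
  split; first by rewrite (le_trans t0s (ltW h1)) (le_trans (ltW h2) ht1).
  move=> r /andP[r1 r2]; apply: claim; first by rewrite r1 (le_trans r2 (le_trans (ltW h2) ht1)).
  exact: le_lt_trans r2 h2.
have := sup_upper_bound hsup Ee.
by rewrite leNgt ltrDl divr_gt0.
Qed.

Lemma agree_cap (K : numFieldType) (R : realType)
  (F : R -> interp_functor K) (X Y : couple K) (T : cV X -> cV Y) (a b : R) :
  stable_family F -> operator T ->
  (forall t, a < t < b -> invertible_at F T t) ->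
  forall t0 t1 : R, a < t0 < b -> a < t1 < b ->
  forall z u v, ns_mem (c0 Y) z -> ns_mem (c1 Y) z ->
    ns_mem (ifun (F t0) X) u -> ns_mem (ifun (F t1) X) v ->
    T u = z -> T v = z -> v = u.
Proof.
move=> HS HT Hi t0 t1 /andP[a0 b0] /andP[a1 b1] z u v z0 z1 hu hv Tu Tv.
case: (leP t0 t1) => h.
  exact: (agree_cap_le HS HT Hi a0 h b1 z0 z1 hu hv Tu Tv).
apply: esym; exact: (agree_cap_le HS HT Hi a1 (ltW h) b0 z0 z1 hv hu Tv Tu).
Qed.

Section B.
Variable K : numFieldType.
Lemma bmem_sub (V : lmodType K) (X : nspace V) x y :
  is_banach X -> ns_mem X x -> ns_mem X y -> ns_mem X (x - y).
Proof.
move=> [_ Hl _ _ _] hx hy.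
by have := Hl (-1) y x hy hx; rewrite scaleN1r addrC.
Qed.
Lemma bnorm_N (V : lmodType K) (X : nspace V) x :
  is_banach X -> ns_mem X x -> ns_norm X (- x) = ns_norm X x.
Proof.
move=> [_ _ _ _ [Hs _ _]] hx.
by rewrite -scaleN1r Hs // normrN normr1 mul1r.
Qed.
Lemma bnorm_sub (V : lmodType K) (X : nspace V) x y :
  is_banach X -> ns_mem X x -> ns_mem X y ->
  ns_norm X (x - y) <= ns_norm X x + ns_norm X y.
Proof.
move=> HB hx hy; rewrite -(bnorm_N HB hy).
have hny : ns_mem X (- y) by rewrite -[- y]add0r; apply: bmem_sub => //; case: HB.
by case: HB => _ _ _ _ [_ Ht _]; apply: Ht.
Qed.
Lemma lin_sub (V W : lmodType K) (f : V -> W) x y :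
  is_linear f -> f (x - y) = f x - f y.
Proof. by move=> Hl; rewrite addrC -scaleN1r Hl scaleN1r addrC. Qed.
End B.

Theorem theorem4p3 (K : numFieldType) (R : realType)
  (F : R -> interp_functor K) (X Y : couple K) (T : cV X -> cV Y) (a b : R) :
  stable_family F ->
  operator T ->
  interval_of_invertibility F T a b ->
  (* Y0 cap Y1 is dense in F_alpha(Y) cap F_beta(Y) (max norm) *)
  (forall al be : R, in01 al -> in01 be ->
     forall y, ns_mem (ifun (F al) Y) y -> ns_mem (ifun (F be) Y) y ->
     forall e : K, 0 < e -> exists z,
       [/\ ns_mem (c0 Y) z, ns_mem (c1 Y) z,
           ns_norm (ifun (F al) Y) (y - z) < e
         & ns_norm (ifun (F be) Y) (y - z) < e]) ->
  forall t0 t1 : R, a < t0 < b -> a < t1 < b ->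
  (* T_{t0}^{-1} y = T_{t1}^{-1} y for y in F_{t0}(Y) cap F_{t1}(Y) *)
  forall y x0 x1,
    ns_mem (ifun (F t0) Y) y -> ns_mem (ifun (F t1) Y) y ->
    ns_mem (ifun (F t0) X) x0 -> ns_mem (ifun (F t1) X) x1 ->
    T x0 = y -> T x1 = y -> x0 = x1.
Proof.
move=> HS HT [_ Hi _] Hd t0 t1 ht0 ht1 y x0 x1 y0 y1 hx0 hx1 Tx0 Tx1.
have [i0 [_ _ _ [M0 HM0]]] := Hi t0 ht0.
have [i1 [_ _ _ [M1 HM1]]] := Hi t1 ht1.
have [C0 HC0] := ifun_sum (F t0) X.
have [C1 HC1] := ifun_sum (F t1) X.
have BX0 := ifun_banach (F t0) X; have BX1 := ifun_banach (F t1) X.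
have BY0 := ifun_banach (F t0) Y; have BY1 := ifun_banach (F t1) Y.
have [_ _ BXn0 _ _] := BX0; have [_ _ BXn1 _ _] := BX1.
have [_ _ BYn0 _ _] := BY0; have [_ _ BYn1 _ _] := BY1.
apply/eqP; rewrite -subr_eq0; apply/eqP.
apply: (c_hausdorff (c:=X)) => e e0.
pose L := `|C0| * `|M0| + `|C1| * `|M1| + 1.
have L0 : 0 < L by rewrite ltr_wpDl // addr_ge0 // mulr_ge0.
pose d := e / 2 / L.
have d0 : 0 < d by rewrite divr_gt0 // divr_gt0.
have [z [z0 z1 nz0 nz1]] := Hd t0 t1 i0 i1 y y0 y1 d d0.
have [w0 [hw0 Tw0]] := preim_cap (Hi t0 ht0) z0 z1.
have [w1 [hw1 Tw1]] := preim_cap (Hi t1 ht1) z0 z1.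
have ew : w1 = w0 by apply: (agree_cap HS HT Hi ht0 ht1 z0 z1 hw0 hw1).
subst w1.
have [HTl _ _] := HT.
have key (s C M n m : K) : 0 <= s -> s <= C * n -> 0 <= n -> n <= M * m ->
    0 <= m -> m < d -> s <= e / 2 * (`|C| * `|M| / L).
  move=> s0 hs n0 hn m0 md.
  have Cn0 : 0 <= C * n := le_trans s0 hs.
  have Mm0 : 0 <= M * m := le_trans n0 hn.
  apply: (le_trans hs); rewrite -(ger0_norm Cn0) normrM (ger0_norm n0).
  apply: (le_trans (ler_wpM2l (normr_ge0 C) hn)).
  rewrite -(ger0_norm Mm0) normrM (ger0_norm m0) mulrA.
  rewrite [e / 2 * _]mulrC -[X in _ <= X]mulrA.
  apply: ler_wpM2l; first by rewrite mulr_ge0.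
  by rewrite mulrC ltW.
have m0 : ns_mem (ifun (F t0) X) (x0 - w0) by apply: bmem_sub.
have m1 : ns_mem (ifun (F t1) X) (x1 - w0) by apply: bmem_sub.
have T0 : T (x0 - w0) = y - z by rewrite lin_sub // Tx0 Tw0.
have T1 : T (x1 - w0) = y - z by rewrite lin_sub // Tx1 Tw0.
have [p0 [q0 [p0m q0m ep0 np0]]] := HC0 _ m0.
have [p1 [q1 [p1m q1m ep1 np1]]] := HC1 _ m1.
have B0 := c0_banach X; have B1 := c1_banach X.
have [_ _ Bn0 _ _] := B0; have [_ _ Bn1 _ _] := B1.
exists (p0 - p1), (q0 - q1); split.
- exact: bmem_sub.
- exact: bmem_sub.
- by rewrite addrACA -opprD -ep0 -ep1 opprB addrA subrK.
have zY0 : ns_mem (ifun (F t0) Y) z.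
  by have [C HC] := ifun_cap (F t0) Y; case: (HC z z0 z1).
have zY1 : ns_mem (ifun (F t1) Y) z.
  by have [C HC] := ifun_cap (F t1) Y; case: (HC z z0 z1).
have yz0 := bmem_sub BY0 y0 zY0; have yz1 := bmem_sub BY1 y1 zY1.
have hh0 := HM0 _ m0; rewrite T0 in hh0.
have k0 := key _ C0 M0 _ _ (addr_ge0 (Bn0 _ p0m) (Bn1 _ q0m)) np0 (BXn0 _ m0)
  hh0 (BYn0 _ yz0) nz0.
have hh1 := HM1 _ m1; rewrite T1 in hh1.
have k1 := key _ C1 M1 _ _ (addr_ge0 (Bn0 _ p1m) (Bn1 _ q1m)) np1 (BXn1 _ m1)
  hh1 (BYn1 _ yz1) nz1.
apply: (le_lt_trans (lerD (bnorm_sub B0 p0m p1m) (bnorm_sub B1 q0m q1m))).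
rewrite addrACA.
apply: (le_lt_trans (lerD k0 k1)).
rewrite -mulrDr -mulrDl.
have h : (`|C0| * `|M0| + `|C1| * `|M1|) / L < 1.
  by rewrite ltr_pdivrMr // mul1r /L ltrDl.
have e20 : 0 < e / 2 by rewrite divr_gt0.
move: h; rewrite -(ltr_pM2l e20) mulr1 => h; apply: (lt_le_trans h).
rewrite ler_pdivrMr // ler_peMr // ?ltW //.
by rewrite ltr1n.
Qed.
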